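(* For every integer $N\ge 0$, let $T_{1\times 3}(4,N)$ be the number of tilings of a $4\times n$ rectangle, $n=3N/4$, by $N$ tiles of size $1\times 3$ (and $T_{1\times 3}(4,N)=0$ if $3N/4\notin\mathbb{Z}$). Then, as formal power series, \[ \sum_{N\ge 0} T_{1\times 3}(4,N)\,z^N=\frac{(1-z)^2(1+z)^2(1+z^2)^2}{1-5z^4+3z^8-z^{12}}. \]
   Context: A tiling of an $m\times n$ rectangle (width $m$, length $n$, made of $mn$ unit squares) by $a\times b$ tiles is a partition of the rectangle into non-overlapping axis-parallel $a\times b$ rectangles with integer corner coordinates, each placed in either of its two orientations. Tilings related by reflections or rotations of the rectangle are counted as distinct. The empty tiling counts once for $N=0$. *)

(* Defs.v *)
From mathcomp Require Import all_boot all_order all_algebra.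
Set Implicit Arguments. Unset Strict Implicit. Unset Printing Implicit Defensive.
Import GRing.Theory.

(* Cells of an m x n rectangle (width m, length n): pairs (row, column). *)
Definition cell (m n : nat) := ('I_m * 'I_n)%type.

Definition rect (m n : nat) (i j h w : nat) : {set cell m n} :=
  [set c : cell m n | (i <= c.1 < i + h) && (j <= c.2 < j + w)].

Definition is_tile (m n a b : nat) (B : {set cell m n}) : bool :=
  [exists i : 'I_m, exists j : 'I_n,
     ((B == rect m n i j a b) && (i + a <= m) && (j + b <= n))
  || ((B == rect m n i j b a) && (i + b <= m) && (j + a <= n))].

Definition is_tiling (m n a b : nat) (P : {set {set cell m n}}) : bool :=
  partition P [set: cell m n] && [forall B in P, is_tile a b B].

Definition T13_4 (N : nat) : nat :=
  if 4 %| N then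
    #|[set P : {set {set cell 4 (3 * N %/ 4)}} | is_tiling 1 3 P && (#|P| == N)]|
  else 0.

Local Open Scope ring_scope.

Definition num13 : {poly int} :=
  (1 - 'X) ^+ 2 * (1 + 'X) ^+ 2 * (1 + 'X ^+ 2) ^+ 2.

Definition den13 : {poly int} :=
  1 - 5%:P * 'X ^+ 4 + 3%:P * 'X ^+ 8 - 'X ^+ 12.

(* Main.v *)
Require Import Defs.
From mathcomp Require Import all_boot all_order all_algebra.
From mathcomp Require Import zify ring.
Set Implicit Arguments. Unset Strict Implicit. Unset Printing Implicit Defensive.

Section Gen.
Variable T : finType.
Variable tl : pred {set T}.

Definition TLg (S : {set T}) :=
  [set P : {set {set T}} | partition P S && [forall B in P, tl B]].

Definition cand (c : T) (S : {set T}) :=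
  [set B : {set T} | tl B && (c \in B) && (B \subset S)].

Lemma TLg_step (S : {set T}) (c : T) : c \in S ->
  #|TLg S| = \sum_(B in cand c S) #|TLg (S :\: B)|.
Proof.
move=> cS.
rewrite -sum1_card (partition_big (fun P => pblock P c) (fun B => B \in cand c S)); last first.
  move=> P; rewrite inE => /andP [Pp /forall_inP Pt].
  have cc : c \in cover P by rewrite (cover_partition Pp).
  have Pb := pblock_mem cc.
  by rewrite /cand inE Pt // mem_pblock cc (partitionS Pp Pb).
apply: eq_big => // B; rewrite inE => /andP [/andP [tB cB] BS].
have B0 : B != set0 by apply/set0Pn; exists c.
transitivity #|(fun Q => B |: Q) @: TLg (S :\: B)|; last first.
  apply: card_in_imset => Q1 Q2; rewrite !inE => /andP [Q1p _] /andP [Q2p _] E.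
  have nB1 : B \notin Q1.
    apply/negP => BQ; have := partitionS Q1p BQ.
    move/subsetP => H; have := H c cB; by rewrite inE cB.
  have nB2 : B \notin Q2.
    apply/negP => BQ; have := partitionS Q2p BQ.
    move/subsetP => H; have := H c cB; by rewrite inE cB.
  by rewrite -(setU1K nB1) -(setU1K nB2) E.
rewrite sum1_card; apply: eq_card => P; change (((P \in TLg S) && (pblock P c == B)) = (P \in [set B |: Q | Q in TLg (S :\: B)])); rewrite [P \in TLg S]inE.
apply/andP/imsetP.
- move=> [/andP [Pp /forall_inP Pt] /eqP Pb].
  have cc : c \in cover P by rewrite (cover_partition Pp).
  have BP : B \in P by rewrite -Pb pblock_mem.
  exists (P :\ B); last by rewrite setD1K.
  rewrite inE (partitionD1 Pp BP) /=; apply/forall_inP => X; rewrite inE => /andP [_ XP].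
  exact: Pt.
- move=> [Q]; rewrite inE => /andP [Qp /forall_inP Qt] ->.
  have dis : [disjoint B & S :\: B].
    by rewrite disjoints_subset; apply/subsetP => x xB; rewrite !inE xB.
  have Pp := partitionU1 Qp B0 dis.
  have E : B :|: (S :\: B) = S.
    apply/setP => x; rewrite !inE; case: (boolP (x \in B)) => //= xB.
    by rewrite (subsetP BS x xB).
  rewrite E in Pp.
  rewrite (def_pblock (partition_trivIset Pp) (setU11 B Q) cB); split=> //; rewrite Pp /=.
  apply/forall_inP => X; rewrite !inE => /orP [/eqP -> //|].
  exact: Qt.
Qed.
End Gen.

Definition mask := (bool * bool * bool * bool)%type.
Definition mget (m : mask) (x : nat) : bool :=
  match x with 0 => m.1.1.1 | 1 => m.1.1.2 | 2 => m.1.2 | 3 => m.2 | _ => false end.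
Definition clr (m : mask) (r : nat) : mask :=
  (m.1.1.1 && (r != 0), m.1.1.2 && (r != 1), m.1.2 && (r != 2), m.2 && (r != 3)).
Definition clr3 (m : mask) (r : nat) := clr (clr (clr m r) r.+1) r.+2.
Definition m0 : mask := (false, false, false, false).
Definition mF : mask := (true, true, true, true).
Definition mne (m : mask) := [|| m.1.1.1, m.1.1.2, m.1.2 | m.2].
Definition fst_row (m : mask) : nat :=
  if m.1.1.1 then 0 else if m.1.1.2 then 1 else if m.1.2 then 2 else 3.
Definition nb (m : mask) : nat := m.1.1.1 + m.1.1.2 + m.1.2 + m.2.

Fixpoint colexp (f : nat) (m1 m2 m3 : mask) : seq (mask * mask) :=
  if f is f'.+1 then
    if mne m1 then
      let r := fst_row m1 in
      (if (r <= 1) && mget m1 r.+1 && mget m1 r.+2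
       then colexp f' (clr3 m1 r) m2 m3 else [::]) ++
      (if mget m2 r && mget m3 r
       then colexp f' (clr m1 r) (clr m2 r) (clr m3 r) else [::])
    else [:: (m2, m3)]
  else [:: (m2, m3)].

Fixpoint h (k : nat) (a b : mask) : nat :=
  if k is k'.+1 then
    sumn (map (fun p => h k' p.1 p.2)
      (colexp 4 a (if 1 <= k' then b else m0) (if 2 <= k' then mF else m0)))
  else 1.

Lemma mget_clr m r x : mget (clr m r) x = mget m x && (x != r).
Proof.
by case: m => [[[a b] c] d]; case: x => [|[|[|[|x]]]] /=;
  rewrite ?andbF // eq_sym.
Qed.

Lemma mget_lt m x : mget m x -> x < 4.
Proof. by case: x => [|[|[|[|x]]]]. Qed.

Lemma fst_row_lt m : fst_row m < 4.
Proof. by rewrite /fst_row; case: ifP => //; case: ifP => //; case: ifP. Qed.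

Lemma fst_row_get m : mne m -> mget m (fst_row m).
Proof. by case: m => [[[[] []] []] []]. Qed.

Lemma fst_row_min m x : mget m x -> fst_row m <= x.
Proof. by case: m => [[[[] []] []] []]; case: x => [|[|[|[|x]]]]. Qed.

Lemma nb_clr m : mne m -> nb (clr m (fst_row m)) < nb m.
Proof. by case: m => [[[[] []] []] []]. Qed.

Lemma nb_clr3 m : mne m -> nb (clr3 m (fst_row m)) < nb m.
Proof. by case: m => [[[[] []] []] []]. Qed.

Lemma mne0 m : ~~ mne m -> forall x, mget m x = false.
Proof. by case: m => [[[[] []] []] []] // _ [|[|[|[|x]]]]. Qed.

Section Grid.
Variable n : nat.

Definition mcol (m1 m2 m3 : mask) (d x : nat) : bool :=
  match d with 0 => mget m1 x | 1 => mget m2 x | 2 => mget m3 x | _ => true end.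

Definition R (j : nat) (m1 m2 m3 : mask) : {set cell 4 n} :=
  [set c : cell 4 n | (j <= c.2) && mcol m1 m2 m3 (c.2 - j) c.1].

Definition TL (S : {set cell 4 n}) := TLg (@is_tile 4 n 1 3) S.

End Grid.

Lemma in_rect m k i j a b (c : cell m k) :
  (c \in rect m k i j a b) = (i <= c.1 < i + a) && (j <= c.2 < j + b).
Proof. by rewrite inE. Qed.

Ltac blia := repeat (apply/andP; split); lia.

Section Step.
Variables (n j : nat) (hj : j < n) (m1 m2 m3 : mask).
Hypothesis ne1 : mne m1.
Hypothesis H2 : forall x, mget m2 x -> j.+1 < n.
Hypothesis H3 : forall x, mget m3 x -> j.+2 < n.

Local Notation rr := (fst_row m1).
Definition cc : cell 4 n := (Ordinal (fst_row_lt m1), Ordinal hj).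
Definition SS := R n j m1 m2 m3.
Definition VV := rect 4 n rr j 3 1.
Definition HH := rect 4 n rr j 1 3.
Definition vc := (rr <= 1) && mget m1 rr.+1 && mget m1 rr.+2.
Definition hc := mget m2 rr && mget m3 rr.

Lemma cS : cc \in SS.
Proof. by rewrite /SS /R inE /= leqnn subnn /=; apply: fst_row_get. Qed.

Lemma SV : vc -> SS :\: VV = R n j (clr3 m1 rr) m2 m3.
Proof.
move=> hv; apply/setP => [[x y]]; rewrite /SS /VV /R /rect !inE /=.
case: (leqP j y) => hjy; last by rewrite !andbF.
have [d Ed] : exists d, (y:nat) = j + d by exists (y - j); lia.
rewrite Ed addKn ltn_add2l /=.
move: hv; rewrite /vc.
case: x => [[|[|[|[|x]]]] hx] //=;
case: m1 => [[[[] []] []] []] //= _; case: d {Ed} => [|[|[|d]]] //=.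
Qed.

Lemma SH : hc -> SS :\: HH = R n j (clr m1 rr) (clr m2 rr) (clr m3 rr).
Proof.
move=> hh; apply/setP => [[x y]]; rewrite /SS /HH /R /rect !inE /=.
case: (leqP j y) => hjy; last by rewrite !andbF.
have [d Ed] : exists d, (y:nat) = j + d by exists (y - j); lia.
rewrite Ed addKn ltn_add2l /=.
case: x => [[|[|[|[|x]]]] hx] //=;
case: m1 => [[[[] []] []] []] //=; case: d {Ed} => [|[|[|d]]] //=;
rewrite ?mget_clr /= ?andbF ?andbT //.
Qed.


Lemma cand_char B : (B \in cand (@is_tile 4 n 1 3) cc SS) =
   (vc && (B == VV)) || (hc && (B == HH)).
Proof.
have rlt := fst_row_lt m1.
apply/idP/idP.
- rewrite /cand inE => /andP [/andP [tB cB] BS].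
  move: tB => /existsP [i /existsP [j' /orP [/andP [/andP [/eqP EB hi] hj'] | /andP [/andP [/eqP EB hi] hj']]]]; subst B.
  + move: cB; rewrite in_rect /= => /andP [/andP [c1 c2] /andP [c3 c4]].
    have hA : (i, j') \in rect 4 n i j' 1 3 by rewrite in_rect /=; blia.
    have := subsetP BS _ hA; rewrite /SS /R inE /= => /andP [jj _].
    have ei : (i : nat) = rr by lia.
    have ej : (j' : nat) = j by lia.
    have e1 : j + 1 < n by lia.
    have e2 : j + 2 < n by lia.
    have hB : (Ordinal rlt, Ordinal e1) \in rect 4 n i j' 1 3 by rewrite in_rect /=; blia.
    have := subsetP BS _ hB; rewrite /SS /R inE /= addKn /= => /andP [_ hm2].
    have hC : (Ordinal rlt, Ordinal e2) \in rect 4 n i j' 1 3 by rewrite in_rect /=; blia.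
    have := subsetP BS _ hC; rewrite /SS /R inE /= addKn /= => /andP [_ hm3].
    by rewrite /hc /HH hm2 hm3 ei ej eqxx orbT.
  + move: cB; rewrite in_rect /= => /andP [/andP [c1 c2] /andP [c3 c4]].
    have ej : (j' : nat) = j by lia.
    have hA : (i, j') \in rect 4 n i j' 3 1 by rewrite in_rect /=; blia.
    have := subsetP BS _ hA; rewrite /SS /R inE /= ej subnn /= => /andP [_ hmi].
    have := fst_row_min hmi => hri.
    have ei : (i : nat) = rr by lia.
    have e1 : rr + 1 < 4 by lia.
    have e2 : rr + 2 < 4 by lia.
    have hB : (Ordinal e1, Ordinal hj) \in rect 4 n i j' 3 1 by rewrite in_rect /=; blia.
    have := subsetP BS _ hB; rewrite /SS /R inE /= subnn addn1 => /andP [_ hma]; have hma' : mget m1 rr.+1 := hma.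
    have hC : (Ordinal e2, Ordinal hj) \in rect 4 n i j' 3 1 by rewrite in_rect /=; blia.
    have := subsetP BS _ hC; rewrite /SS /R inE /= subnn addn2 => /andP [_ hmb]; have hmb' : mget m1 rr.+2 := hmb.
    have r1 : rr <= 1 by lia.
    by rewrite /vc /VV r1 hma' hmb' ei eqxx.
- case/orP => /andP [cond /eqP ->]; rewrite /cand inE.
  + move: cond; rewrite /vc => /andP [/andP [r1 ma] mb].
    apply/andP; split; [apply/andP; split|].
    * apply/existsP; exists (Ordinal rlt); apply/existsP; exists (Ordinal hj).
      apply/orP; right; rewrite eqxx /=; apply/andP; split; lia.
    * rewrite /cc /VV /rect inE /=; apply/andP; split; lia.
    * apply/subsetP => [[x y]]; rewrite /VV /SS /R /rect !inE /= => /andP [hx hy].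
      have ey : (y : nat) = j by lia.
      rewrite ey leqnn subnn /=.
      have [->|[->|->]] : (x:nat) = rr \/ (x:nat) = rr.+1 \/ (x:nat) = rr.+2 by lia.
      - exact: fst_row_get.
      - exact: ma.
      - exact: mb.
  + move: cond; rewrite /hc => /andP [ma mb].
    have := H3 mb => e2.
    apply/andP; split; [apply/andP; split|].
    * apply/existsP; exists (Ordinal rlt); apply/existsP; exists (Ordinal hj).
      apply/orP; left; rewrite eqxx /=; apply/andP; split; lia.
    * rewrite /cc /HH /rect inE /=; apply/andP; split; lia.
    * apply/subsetP => [[x y]]; rewrite /HH /SS /R /rect !inE /= => /andP [hx hy].
      have ex : (x : nat) = rr by lia.
      have [d Ed] : exists d, (y:nat) = j + d by exists (y - j); lia.
      rewrite ex Ed addKn leq_addr /=.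
      have : d < 3 by lia.
      case: d {Ed} => [|[|[|d]]] //= _.
      exact: fst_row_get.
Qed.

Lemma VH : vc -> VV != HH.
Proof.
rewrite /vc => /andP [/andP [r1 _] _].
have e1 : rr + 1 < 4 by lia.
apply/negP => /eqP E.
have : (Ordinal e1, Ordinal hj) \in VV by rewrite /VV in_rect /=; blia.
by rewrite E /HH in_rect /= ltnn andbF.
Qed.

End Step.

Lemma Rm0 n j m1 m2 m3 : ~~ mne m1 -> R n j m1 m2 m3 = R n j m0 m2 m3.
Proof.
move=> ne; apply/setP => c; rewrite !inE; case: (c.2 - j) => [|d] //=.
by rewrite mne0 //; case: c.1 => [[|[|[|[|x]]]] ?]; rewrite andbF.
Qed.

Lemma col n j (hj : j < n) f : forall m1 m2 m3, nb m1 <= f ->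
  (forall x, mget m2 x -> j.+1 < n) -> (forall x, mget m3 x -> j.+2 < n) ->
  #|TL (R n j m1 m2 m3)| = \sum_(p <- colexp f m1 m2 m3) #|TL (R n j m0 p.1 p.2)|.
Proof.
elim: f => [|f IH] m1 m2 m3 hf h2 h3.
  have ne : ~~ mne m1 by move: hf; case: m1 => [[[[] []] []] []].
  by rewrite /= big_cons big_nil addn0 Rm0.
rewrite /=; case: (boolP (mne m1)) => ne; last by rewrite big_cons big_nil addn0 Rm0.
rewrite big_cat /TL (TLg_step _ (cS hj m2 m3 ne)) -/(TL _).
rewrite (eq_bigl (fun B => (vc m1 && (B == VV n j m1)) || (hc m1 m2 m3 && (B == HH n j m1))));
  last by move=> B; rewrite (cand_char hj m2 ne h3).
rewrite -[(_ <= 1) && _ && _]/(vc m1) -[mget m2 _ && mget m3 _]/(hc m1 m2 m3).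
have IHV : vc m1 -> #|TL (SS n j m1 m2 m3 :\: VV n j m1)| =
   \sum_(p <- colexp f (clr3 m1 (fst_row m1)) m2 m3) #|TL (R n j m0 p.1 p.2)|.
  move=> hv; rewrite (SV hj m2 m3 ne hv); apply: IH => //.
  by have := nb_clr3 ne; lia.
have IHH : hc m1 m2 m3 -> #|TL (SS n j m1 m2 m3 :\: HH n j m1)| =
   \sum_(p <- colexp f (clr m1 (fst_row m1)) (clr m2 (fst_row m1)) (clr m3 (fst_row m1)))
      #|TL (R n j m0 p.1 p.2)|.
  move=> hh; rewrite (SH hj ne hh); apply: IH.
  - by have := nb_clr ne; lia.
  - by move=> x; rewrite mget_clr => /andP [/h2].
  - by move=> x; rewrite mget_clr => /andP [/h3].
case hv: (vc m1); case hh: (hc m1 m2 m3) => /=.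
- rewrite (bigD1 (VV n j m1)) ?eqxx //= IHV //.
  rewrite (eq_bigl (fun B => B == HH n j m1)) ?big_pred1_eq ?IHH ?big_nil ?addn0 //.
  move=> B; case: eqP => [->|] /=; last by rewrite andbT.
  by rewrite (negbTE (VH hj ne hv)).
- rewrite (eq_bigl (fun B => B == VV n j m1)) ?big_pred1_eq ?IHV ?big_nil ?addn0 //.
  by move=> B; rewrite orbF.
- rewrite (eq_bigl (fun B => B == HH n j m1)) ?big_pred1_eq ?IHH ?big_nil //.
- by rewrite big_pred0 ?big_nil.
Qed.

Lemma TLg0 (T : finType) (tl : pred {set T}) : #|TLg tl set0| = 1.
Proof.
rewrite -(cards1 (set0 : {set {set T}})); apply: eq_card => P.
rewrite !inE partition_set0; case: eqP => [->|] //=.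
by apply/forall_inP => B; rewrite inE.
Qed.

Lemma Rshift n j a b : R n j m0 a b = R n j.+1 a b mF.
Proof.
apply/setP => [[x y]]; rewrite !inE /=.
case: (leqP j y) => hjy; last by rewrite ltnNge (ltnW hjy).
have [d Ed] : exists d, (y:nat) = j + d by exists (y - j); lia.
rewrite Ed addKn; case: d {Ed} => [|d]; first by rewrite addn0 ltnn; case: x => [[|[|[|[|x]]]] ?].
have -> : j + d.+1 - j.+1 = d by lia. have -> : j < j + d.+1 by lia. by case: d => [|[|[|d]]] //=; case: x => [[|[|[|[|x]]]] ?].
Qed.

Lemma Rtrunc n j k a b : j + k.+1 = n ->
  R n j a b mF = R n j a (if 1 <= k then b else m0) (if 2 <= k then mF else m0).
Proof.
move=> E; apply/setP => [[x [y hy]]]; rewrite !inE /=.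
case: (leqP j y) => hjy //=.
have [d Ed] : exists d, y = j + d by exists (y - j); lia.
rewrite Ed addKn; case: d Ed => [|[|[|d]]] Ed //=.
- by case: ifP => // /negbT; lia.
- by case: ifP => // /negbT; lia.
Qed.

Lemma full n k : forall j, j + k = n -> forall a b, #|TL (R n j a b mF)| = h k a b.
Proof.
elim: k => [|k IH] j E a b.
  have -> : R n j a b mF = set0.
    apply/setP => [[x [y hy]]]; rewrite !inE /=; apply/negbTE; lia.
  exact: TLg0.
have hj : j < n by lia.
rewrite (Rtrunc a b E) (col hj (f:=4)).
- rewrite /= sumnE big_map; apply: eq_bigr => p _; rewrite Rshift; apply: IH; lia.
- by case: a => [[[[] []] []] []].
- by case: ifP => k1 x; [lia | rewrite mne0].
- by case: ifP => k1 x; [lia | rewrite mne0].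
Qed.

Lemma card_int m lo w : lo + w <= m -> #|[set x : 'I_m | lo <= x < lo + w]| = w.
Proof.
elim: w => [|w IH] hw.
  by apply/eqP; rewrite cards_eq0; apply/eqP/setP => x; rewrite !inE addn0; apply/negbTE; lia.
have hlt : lo + w < m by lia.
have -> : [set x : 'I_m | lo <= x < lo + w.+1] = Ordinal hlt |: [set x : 'I_m | lo <= x < lo + w].
  apply/setP => x; rewrite !inE -val_eqE /=; lia.
rewrite cardsU1 IH ?inE /=; [by rewrite ltnn andbF | lia].
Qed.

Lemma card_rect m k i j a b : i + a <= m -> j + b <= k ->
  #|rect m k i j a b| = a * b.
Proof.
move=> ha hb.
have -> : rect m k i j a b =
  setX [set x : 'I_m | i <= x < i + a] [set y : 'I_k | j <= y < j + b].
  by apply/setP => [[x y]]; rewrite !inE.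
by rewrite cardsX !card_int.
Qed.

Lemma card_tile m k (B : {set cell m k}) : is_tile 1 3 B -> #|B| = 3.
Proof.
move=> /existsP [i /existsP [j /orP [/andP [/andP [/eqP -> h1] h2] | /andP [/andP [/eqP -> h1] h2]]]];
  by rewrite card_rect.
Qed.

Lemma area n (P : {set {set cell 4 n}}) : is_tiling 1 3 P -> 3 * #|P| = 4 * n.
Proof.
move=> /andP [Pp /forall_inP Pt].
have := card_partition Pp; rewrite cardsT card_prod !card_ord => ->.
rewrite (eq_bigr (fun _ => 3)); last by move=> B /Pt /card_tile.
by rewrite sum_nat_const mulnC.
Qed.

Lemma T13_eq N : T13_4 N = if 4 %| N then h (3 * N %/ 4) mF mF else 0.
Proof.
rewrite /T13_4; case: ifP => // dvd.
set n := 3 * N %/ 4.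
have Rt : R n 0 mF mF mF = setT.
  by apply/setP => [[[[|[|[|[|x]]]] hx] y]]; rewrite !inE //= subn0; case: (y : nat) => [|[|[|d]]].
rewrite -(@full n n 0) // Rt.
apply: eq_card => P; rewrite !inE.
case tP: (is_tiling 1 3 P) => /=.
  have := area tP => E.
  move: tP => /andP [-> ->]; apply/eqP.
  have hn : 4 * n = 3 * N by rewrite /n mulnC divnK // dvdn_mull.
  by apply/eqP; rewrite -(eqn_pmul2l (_ : 0 < 3)) // E hn.
by move: tP; rewrite /is_tiling => ->.
Qed.

Definition mk (b0 b1 b2 b3 : bool) : mask := (b0, b1, b2, b3).
Definition S15 : seq (mask * mask) :=
  let z := m0 in let o := mk true false false false in
  let s := mk true true true false in let e := mk false false false true in
  let f := mk false true true true in
  [:: (z, z); (z, o); (z, s); (z, e); (z, f); (z, mF); (o, o); (o, mF);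
      (s, s); (s, mF); (e, e); (e, mF); (f, f); (f, mF); (mF, mF)].

Lemma h_step k a b : 2 <= k -> h k.+1 a b = \sum_(p <- colexp 4 a b mF) h k p.1 p.2.
Proof.
move=> hk; have k1 : 1 <= k by lia.
change (h k.+1 a b) with (sumn (map (fun p => h k p.1 p.2)
  (colexp 4 a (if 1 <= k then b else m0) (if 2 <= k then mF else m0)))).
by rewrite k1 hk sumnE big_map.
Qed.

Definition Q k (s : mask * mask) :=
  h (k + 9) s.1 s.2 + 3 * h (k + 3) s.1 s.2 == 5 * h (k + 6) s.1 s.2 + h k s.1 s.2.

Lemma closed : all (fun s => all (fun p => p \in S15) (colexp 4 s.1 s.2 mF)) S15.
Proof. by vm_compute. Qed.

Lemma Qbase : all (Q 2) S15.
Proof. by vm_compute. Qed.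

Lemma recQ k : 2 <= k -> all (Q k) S15 -> all (Q k.+1) S15.
Proof.
move=> hk /allP HQ; apply/allP => s sS; rewrite /Q !addSn !h_step; try lia.
rewrite !big_distrr -!big_split /=; apply/eqP; apply: eq_big_seq => p pc.
apply/eqP; apply: HQ.
exact: (allP (allP closed s sS)) p pc.
Qed.

Lemma Qall k : 2 <= k -> all (Q k) S15.
Proof.
elim: k => // k IH; rewrite leq_eqVlt => /orP [/eqP <-|hk]; first exact: Qbase.
by apply: recQ => //; apply: IH.
Qed.

Lemma gFF : (mF, mF) \in S15. Proof. by []. Qed.

Lemma grec K : h (3 * K + 9) mF mF + 3 * h (3 * K + 3) mF mF =
               5 * h (3 * K + 6) mF mF + h (3 * K) mF mF.
Proof.
case: K => [|K]; first by vm_compute.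
apply/eqP; have := allP (Qall (k := 3 * K.+1) _) _ gFF; apply; lia.
Qed.


Import GRing.Theory.
Local Open Scope ring_scope.

Lemma sum_pick (N c : nat) (F : nat -> int) :
  \sum_(k < N.+1) (k == c :> nat)%:R * F k = if (c < N.+1)%N then F c else 0.
Proof.
rewrite -(@big_ord1_eq int 0 +%R F c N.+1) [RHS]big_mkcond /=; apply: eq_bigr => k _.
by case: eqP => _; rewrite ?mul1r ?mul0r.
Qed.

Lemma den_coef k : den13`_k =
  (k == 0%N)%:R - 5 * (k == 4%N)%:R + 3 * (k == 8%N)%:R - (k == 12%N)%:R :> int.
Proof. by rewrite /den13 !coefB !coefD coef1 !coefN !coefCM !coefXn. Qed.

Lemma num_eq : num13 = 1 - ('X ^+ 4 + 'X ^+ 4) + 'X ^+ 8.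
Proof. rewrite /num13; ring. Qed.

Lemma num_coef k : num13`_k = (k == 0%N)%:R - ((k == 4%N)%:R + (k == 4%N)%:R) + (k == 8%N)%:R :> int.
Proof. by rewrite num_eq !coefD !coefN coefD coef1 !coefXn. Qed.

Theorem mainTheorem1 :
  forall N : nat,
    \sum_(k < N.+1) den13`_k * ((T13_4 (N - k))%:Z) = num13`_N.
Proof.
move=> N.
rewrite (eq_bigr (fun k : 'I_N.+1 => (k == 0%N :> nat)%:R * (T13_4 (N - k))%:Z
   - 5 * ((k == 4%N :> nat)%:R * (T13_4 (N - k))%:Z)
   + 3 * ((k == 8%N :> nat)%:R * (T13_4 (N - k))%:Z)
   - (k == 12%N :> nat)%:R * (T13_4 (N - k))%:Z)); last first.
  by move=> k _; rewrite den_coef; ring.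
rewrite !sumrB !big_split /= ?sumrN -!mulr_sumr !(sum_pick N _ (fun k => (T13_4 (N - k))%:Z)) subn0 num_coef.
have [N12|N12] := ltnP N 12.
  rewrite !T13_eq; move: N12.
  by case: N => [|[|[|[|[|[|[|[|[|[|[|[|N]]]]]]]]]]]] _ //; vm_compute.
have [M ->] : exists M, N = (M + 12)%N by exists (N - 12)%N; lia.
rewrite !ifT; try lia.
have e : forall c, (c < 12)%N -> (M + 12 == c)%N = false by move=> c hc; apply/negbTE; lia.
rewrite !e // ltn0Sn (_ : false%:R = 0 :> int) // (_ : (M + 12 - 4 = M + 8)%N); last lia.
rewrite (_ : (M + 12 - 8 = M + 4)%N); last lia.
rewrite (_ : (M + 12 - 12 = M)%N); last lia.
rewrite !T13_eq.
have [[K EK]|nd] : (exists K, M = 4 * K)%N \/ ~~ (4 %| M)%N.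
  by case: (boolP (4 %| M)%N) => [/dvdnP [K ->]|]; [left; exists K; lia|right].
- subst M.
  rewrite !ifT; try lia.
  rewrite (_ : (3 * (4 * K + 12) %/ 4 = 3 * K + 9)%N); last lia.
  rewrite (_ : (3 * (4 * K + 8) %/ 4 = 3 * K + 6)%N); last lia.
  rewrite (_ : (3 * (4 * K + 4) %/ 4 = 3 * K + 3)%N); last lia.
  rewrite (_ : (3 * (4 * K) %/ 4 = 3 * K)%N); last lia.
  have := grec K.
  move=> E; lia.
- rewrite !ifF; try lia.
Qed.
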